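(* Let $G$ be a graph of tree-width $\le w\in\mathbb N$, and let $\sigma$ be a finite star of separations of $G$ of order $\le w+1$ whose interior is finite. Suppose that all separations in $\sigma$ are left-$\ell$-robust for $\ell:=(w+1)^2(w+2)+w+1$. Then $\mathrm{torso}(\sigma)$ has tree-width $\le w$.
   Context: Graphs may be infinite. A separation of $G$ is a set $\{A,B\}$ with $A,B\subseteq V(G)$, $A\cup B=V(G)$ and no edge of $G$ between $A\setminus B$ and $B\setminus A$; its order is $|A\cap B|$; its orientations are $(A,B)$ and $(B,A)$, ordered by $(A,B)\le(C,D)$ iff $A\subseteq C$ and $B\supseteq D$. A star is a set $\sigma$ of oriented finite-order separations, not containing $(V(G),V(G))$, with $(A,B)\le(D,C)$ for any two distinct $(A,B),(C,D)\in\sigma$; its interior is $\mathrm{int}(\sigma)=\bigcap_{(A,B)\in\sigma}B$. $\mathrm{torso}(\sigma)$ is the graph obtained from $G[\mathrm{int}(\sigma)]$ by adding an edge $uv$ whenever distinct $u,v\in\mathrm{int}(\sigma)$ both lie in $A\cap B$ for some $(A,B)\in\sigma$. A finite-order $(A,B)$ is left-$\ell$-robust if there exist a set $U\subseteq A$ of size $\ell$ and pairwise disjoint paths $P_x\subseteq G[A]$ ($x\in A\cap B$) with $P_x$ ending in $x$, such that for each $x$ there are $\ell$ $U$–$P_x$ paths in $G[(A\setminus B)\cup\{x\}]$ meeting pairwise at most in their endvertices on $P_x$. A graph has tree-width $\le w$ if it has a tree-decomposition all of whose bags have at most $w+1$ vertices. *)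

(* Defs.v *)
(* Graphs may be infinite: a graph is a vertex type V with an
   adjacency relation adj : V -> V -> Prop (simple: symmetric, irreflexive).
   Vertex sets are predicates V -> Prop. *)
From Stdlib Require Import List Arith.
Import ListNotations.

Section Defs.
Context {V : Type}.

Definition simple_graph (adj : V -> V -> Prop) : Prop :=
  (forall u v, adj u v -> adj v u) /\ (forall v, ~ adj v v).

Definition finite_set (X : V -> Prop) : Prop :=
  exists l : list V, forall v, X v -> In v l.
Definition card_le (X : V -> Prop) (n : nat) : Prop :=
  exists l : list V, (forall v, X v -> In v l) /\ length l <= n.
Definition card_eq (X : V -> Prop) (n : nat) : Prop :=
  exists l : list V, NoDup l /\ length l = n /\ (forall v, X v <-> In v l).

Fixpoint walk (adj : V -> V -> Prop) (p : list V) : Prop :=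
  match p with
  | x :: ((y :: _) as t) => adj x y /\ walk adj t
  | _ => True
  end.

Definition is_path (adj : V -> V -> Prop) (p : list V) : Prop :=
  p <> [] /\ NoDup p /\ walk adj p.

Definition starts (p : list V) (u : V) : Prop := hd_error p = Some u.
Definition ends (p : list V) (v : V) : Prop := hd_error (rev p) = Some v.

Definition XY_path (adj : V -> V -> Prop) (X Y : V -> Prop) (p : list V) : Prop :=
  is_path adj p /\
  exists u v, starts p u /\ ends p v /\ X u /\ Y v /\
    (forall z, In z p -> X z -> z = u) /\ (forall z, In z p -> Y z -> z = v).

Definition osep := ((V -> Prop) * (V -> Prop))%type.

Definition is_separation (adj : V -> V -> Prop) (s : osep) : Prop :=
  (forall v, fst s v \/ snd s v) /\
  (forall u v, fst s u -> ~ snd s u -> snd s v -> ~ fst s v -> ~ adj u v).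

Definition sep_inter (s : osep) : V -> Prop := fun v => fst s v /\ snd s v.

Definition finite_order (s : osep) : Prop := finite_set (sep_inter s).
Definition order_le (s : osep) (n : nat) : Prop := card_le (sep_inter s) n.

Definition sep_le (s t : osep) : Prop :=
  (forall v, fst s v -> fst t v) /\ (forall v, snd t v -> snd s v).

Definition sep_inv (s : osep) : osep := (snd s, fst s).

Definition is_star (adj : V -> V -> Prop) (sigma : osep -> Prop) : Prop :=
  (forall s, sigma s -> is_separation adj s /\ finite_order s) /\
  (forall s, sigma s -> ~ (forall v, fst s v /\ snd s v)) /\
  (forall s t, sigma s -> sigma t -> s <> t -> sep_le s (sep_inv t)).

Definition finite_star (sigma : osep -> Prop) : Prop :=
  exists l : list osep, forall s, sigma s -> In s l.

Definition interior (sigma : osep -> Prop) : V -> Prop :=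
  fun v => forall s, sigma s -> snd s v.

Definition torso_adj (adj : V -> V -> Prop) (sigma : osep -> Prop)
  (u v : {x : V | interior sigma x}) : Prop :=
  proj1_sig u <> proj1_sig v /\
  (adj (proj1_sig u) (proj1_sig v) \/
   exists s, sigma s /\ sep_inter s (proj1_sig u) /\ sep_inter s (proj1_sig v)).

Definition left_robust (adj : V -> V -> Prop) (l : nat) (s : osep) : Prop :=
  exists U : V -> Prop,
    (forall u, U u -> fst s u) /\ card_eq U l /\
    exists P : V -> list V,
      (forall x, sep_inter s x ->
         is_path adj (P x) /\ (forall v, In v (P x) -> fst s v) /\ ends (P x) x) /\
      (forall x y, sep_inter s x -> sep_inter s y -> x <> y ->
         forall v, In v (P x) -> ~ In v (P y)) /\
      (forall x, sep_inter s x ->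
         exists Q : nat -> list V,
           (forall i, i < l ->
              XY_path adj U (fun v => In v (P x)) (Q i) /\
              (forall v, In v (Q i) -> (fst s v /\ ~ snd s v) \/ v = x)) /\
           (forall i j, i < l -> j < l -> i <> j ->
              Q i <> Q j /\
              (forall v, In v (Q i) -> In v (Q j) -> In v (P x)))).
End Defs.

Definition is_tree {T : Type} (tadj : T -> T -> Prop) : Prop :=
  simple_graph tadj /\ inhabited T /\
  (forall s t, exists p, is_path tadj p /\ starts p s /\ ends p t) /\
  (* no cycles *)
  (forall p : list T, is_path tadj p -> 3 <= length p ->
     forall a b, starts p a -> ends p b -> ~ tadj b a).

Definition tree_decomposition {W T : Type} (adj : W -> W -> Prop)
  (tadj : T -> T -> Prop) (bag : T -> W -> Prop) : Prop :=
  (forall v, exists t, bag t v) /\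
  (forall u v, adj u v -> exists t, bag t u /\ bag t v) /\
  (forall v t1 t2, bag t1 v -> bag t2 v ->
     exists p, is_path tadj p /\ starts p t1 /\ ends p t2 /\
               forall t, In t p -> bag t v).

Definition tw_le {W : Type} (adj : W -> W -> Prop) (w : nat) : Prop :=
  exists (T : Type) (tadj : T -> T -> Prop) (bag : T -> W -> Prop),
    is_tree tadj /\ tree_decomposition adj tadj bag /\
    forall t, card_le (bag t) (w + 1).

(* Main.v *)
Require Import Defs.
From Stdlib Require Import List Arith Lia Classical ProofIrrelevance IndefiniteDescription.
Import ListNotations.

Lemma last_default {A} (a d : A) l : last (a :: l) d = last (a :: l) a.
Proof. revert a d; induction l as [|b l IH]; intros a d; [reflexivity|].
  change (last (b :: l) d = last (b :: l) a). rewrite (IH b d), (IH b a). reflexivity. Qed.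

Lemma hd_rev_last {A} (a : A) l : hd_error (rev (a :: l)) = Some (last (a :: l) a).
Proof.
  revert a; induction l as [|b l IH]; intros a; [reflexivity|].
  change (rev (a :: b :: l)) with (rev (b :: l) ++ [a]).
  assert (Hne : rev (b :: l) <> []).
  { intro E. apply (f_equal (@length A)) in E. rewrite length_rev in E. simpl in E. discriminate. }
  destruct (rev (b :: l)) eqn:E; [congruence|].
  specialize (IH b). rewrite E in IH. change (Some a0 = Some (last (b :: l) b)) in IH.
  change (Some a0 = Some (last (b :: l) a)). rewrite last_default. exact IH.
Qed.

Lemma ends_last {A} (a : A) l v : ends (a :: l) v <-> last (a :: l) a = v.
Proof. unfold ends. rewrite hd_rev_last. split; intro H; [injection H; auto | subst; auto]. Qed.


Lemma last_app_cons {A} (l1 : list A) b l2 d : last (l1 ++ b :: l2) d = last (b :: l2) b.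
Proof.
  induction l1 as [|c l1 IH]; simpl.
  - apply last_default.
  - destruct (l1 ++ b :: l2) eqn:E; [destruct l1; discriminate|]. exact IH.
Qed.

Lemma last_in {A} (a : A) l : In (last (a :: l) a) (a :: l).
Proof. revert a; induction l as [|b l IH]; intros a; [simpl; auto|].
  change (In (last (b :: l) a) (a :: b :: l)). rewrite last_default. right. apply IH. Qed.

Lemma walk_app {V} (R : V -> V -> Prop) l1 a l2 :
  walk R (l1 ++ [a]) -> walk R (a :: l2) -> walk R (l1 ++ a :: l2).
Proof.
  induction l1 as [|b l1 IH]; simpl; auto.
  intros H1 H2. destruct l1 as [|c l1]; simpl in *.
  - destruct H1; auto.
  - destruct H1 as [Hbc H1]. split; auto. apply IH; auto.
Qed.

Lemma walk_suffix {V} (R : V -> V -> Prop) l1 l2 : walk R (l1 ++ l2) -> walk R l2.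
Proof.
  induction l1 as [|b l1 IH]; simpl; auto.
  intros H. apply IH. destruct (l1 ++ l2); auto. destruct H; auto.
Qed.

Lemma walk_prefix {V} (R : V -> V -> Prop) l1 l2 : walk R (l1 ++ l2) -> walk R l1.
Proof.
  induction l1 as [|b l1 IH]; simpl; auto.
  intros H. destruct l1 as [|c l1]; simpl; auto.
  simpl in H. destruct H as [H1 H2]; split; auto. apply IH. exact H2.
Qed.

Lemma walk_rev {V} (R : V -> V -> Prop) (Hs : forall x y, R x y -> R y x) l :
  walk R l -> walk R (rev l).
Proof.
  induction l as [|x l IH]; simpl; auto.
  intros H. destruct l as [|y l]; simpl; auto.
  destruct H as [Hxy H]. specialize (IH H). simpl in IH.
  rewrite <- app_assoc. simpl. apply walk_app; auto. simpl. auto.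
Qed.

Lemma walk_mono_in {V} (R R' : V -> V -> Prop) l :
  (forall x y, In x l -> In y l -> R x y -> R' x y) -> walk R l -> walk R' l.
Proof.
  induction l as [|x l IH]; simpl; auto.
  intros Hm H. destruct l as [|y l]; auto.
  destruct H as [Hxy H]. split.
  - apply Hm; simpl; auto.
  - apply IH; auto.
Qed.

Definition conn {A} (R : A -> A -> Prop) (C : A -> Prop) (a b : A) : Prop :=
  exists g, walk R (a :: g) /\ last (a :: g) a = b /\ forall z, In z (a :: g) -> C z.

Lemma conn_refl {A} (R : A -> A -> Prop) (C : A -> Prop) a : C a -> conn R C a a.
Proof. intros; exists []; simpl; intuition congruence. Qed.

Lemma conn_trans {A} (R : A -> A -> Prop) (C : A -> Prop) a b c :
  conn R C a b -> conn R C b c -> conn R C a c.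
Proof.
  intros (g1 & W1 & L1 & C1) (g2 & W2 & L2 & C2).
  exists (g1 ++ g2).
  assert (E : exists r, a :: g1 = r ++ [b]).
  { exists (removelast (a :: g1)). rewrite <- L1. apply app_removelast_last. discriminate. }
  destruct E as [r E].
  rewrite app_comm_cons, E, <- app_assoc.
  split; [|split].
  - apply walk_app; [rewrite <- E; auto | auto].
  - simpl. rewrite last_app_cons. auto.
  - intros z Hz. apply in_app_iff in Hz. destruct Hz as [Hz|Hz].
    + apply C1. rewrite E. apply in_app_iff; auto.
    + apply C2. auto.
Qed.

Lemma conn_sym {A} (R : A -> A -> Prop) (Hs : forall x y, R x y -> R y x) (C : A -> Prop) a b :
  conn R C a b -> conn R C b a.
Proof.
  intros (g & W & L & Cg).
  pose proof (hd_rev_last a g) as H. rewrite L in H.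
  destruct (rev (a :: g)) as [|b' g'] eqn:E; [discriminate|].
  simpl in H. injection H as ->.
  exists g'. rewrite <- E. split; [|split].
  - apply walk_rev; auto.
  - change (last (rev g ++ [a]) b = a). apply last_last.
  - intros z Hz. apply Cg. apply in_rev. auto.
Qed.

Lemma conn_in_walk {A} (R : A -> A -> Prop) (C : A -> Prop) h l :
  walk R (h :: l) -> (forall z, In z (h :: l) -> C z) -> forall z, In z (h :: l) -> conn R C h z.
Proof.
  revert h; induction l as [|b l IH]; intros h W Cl z Hz.
  - destruct Hz as [<-|[]]. apply conn_refl. apply Cl; simpl; auto.
  - destruct Hz as [<-|Hz]. apply conn_refl. apply Cl; simpl; auto.
    destruct W as [Hhb W].
    apply conn_trans with b.
    + exists [b]. simpl. repeat split; auto. intros y [<-|[<-|[]]]; apply Cl; simpl; auto.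
    + apply IH; auto. intros y Hy; apply Cl; simpl; auto.
Qed.

Lemma conn_in_path {A} (R : A -> A -> Prop) (Hs : forall x y, R x y -> R y x) (C : A -> Prop) l a b :
  walk R l -> (forall z, In z l -> C z) -> In a l -> In b l -> conn R C a b.
Proof.
  intros W Cl Ha Hb. destruct l as [|h l]; [destruct Ha|].
  apply conn_trans with h.
  - apply conn_sym; auto. apply conn_in_walk with l; auto.
  - apply conn_in_walk with l; auto.
Qed.

Lemma conn_mono {A} (R : A -> A -> Prop) (C C' : A -> Prop) a b :
  (forall z, C z -> C' z) -> conn R C a b -> conn R C' a b.
Proof. intros H (g & W & L & Cg). exists g; auto. Qed.

Lemma path_cons_inv {A} (R : A -> A -> Prop) a l : is_path R (a :: l) -> l <> [] -> is_path R l.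
Proof.
  intros (_ & N & W) Hne. split; auto. split.
  - inversion N; auto.
  - destruct l; [congruence|]. destruct W; auto.
Qed.

Lemma path_suffix {A} (R : A -> A -> Prop) l1 l2 : is_path R (l1 ++ l2) -> l2 <> [] -> is_path R l2.
Proof.
  intros (_ & N & W) Hne. split; auto. split.
  - eapply NoDup_app_remove_l; eauto.
  - eapply walk_suffix; eauto.
Qed.

Lemma nodup_last_self {A} (a : A) l : NoDup (a :: l) -> last (a :: l) a = a -> l = [].
Proof.
  intros N L. destruct l as [|c l]; auto. exfalso.
  inversion N; subst. apply H1.
  change (last (c :: l) a = a) in L. rewrite last_default in L. rewrite <- L. apply last_in.
Qed.

Lemma shorten {A} (R : A -> A -> Prop) a g : walk R (a :: g) ->
  exists p, is_path R (a :: p) /\ last (a :: p) a = last (a :: g) a /\ incl (a :: p) (a :: g).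
Proof.
  revert a; induction g as [|b g IH]; intros a W.
  - exists []. split; [|split]; auto.
    + split; [discriminate|split]; simpl; auto. constructor; auto. constructor.
    + apply incl_refl.
  - destruct W as [Hab W]. destruct (IH b W) as (p & Pp & Lp & Ip).
    destruct (classic (In a (b :: p))) as [Hin|Hnin].
    + destruct (in_split _ _ Hin) as (l1 & l2 & E).
      exists l2. split; [|split].
      * rewrite E in Pp. eapply path_suffix; eauto. discriminate.
      * change (last (a :: l2) a = last (b :: g) a).
        rewrite (last_default b a g), <- Lp, <- (last_default b a p), E, last_app_cons.
        reflexivity.
      * intros z Hz. assert (In z (b :: p)) as Hz'.
        { rewrite E. apply in_app_iff. right. exact Hz. }
        apply Ip in Hz'. right. exact Hz'.
    + exists (b :: p). split; [|split].
      * destruct Pp as (_ & N & Wp). split; [discriminate|split].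
        -- constructor; auto.
        -- split; auto.
      * change (last (b :: p) a = last (b :: g) a). rewrite (last_default b a p), (last_default b a g). exact Lp.
      * intros z [<-|Hz]; [left; auto|]. right. apply Ip. exact Hz.
Qed.

Lemma path_unique {T} (tadj : T -> T -> Prop) (Htree : is_tree tadj) :
  forall p q a b, is_path tadj (a :: p) -> is_path tadj (a :: q) ->
  last (a :: p) a = b -> last (a :: q) a = b -> p = q.
Proof.
  destruct Htree as ((Hs & Hirr) & _ & _ & Hac).
  induction p as [|c p IH]; intros q a b Pp Pq Lp Lq.
  - simpl in Lp. rewrite <- Lp in Lq. symmetry. apply (nodup_last_self a q); auto. apply Pq.
  - destruct q as [|d q].
    + simpl in Lq. rewrite <- Lq in Lp. exfalso.
      pose proof (nodup_last_self a (c :: p) (proj1 (proj2 Pp)) Lp). discriminate.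
    + destruct (classic (c = d)) as [<-|Hcd].
      * f_equal. apply IH with c b.
        -- apply (path_cons_inv _ a); auto; discriminate.
        -- apply (path_cons_inv _ a); auto; discriminate.
        -- rewrite <- Lp. symmetry. change (last (c :: p) a = last (c :: p) c). apply last_default.
        -- rewrite <- Lq. symmetry. change (last (c :: q) a = last (c :: q) c). apply last_default.
      * exfalso.
        destruct Pp as (_ & Np & Wp). destruct Pq as (_ & Nq & Wq).
        assert (Hcb : conn tadj (fun z => z <> a) c b).
        { apply conn_in_path with (c :: p); auto.
          - destruct Wp; auto.
          - intros z Hz E; subst z. inversion Np; auto.
          - left; auto.
          - rewrite <- Lp. change (In (last (c :: p) a) (c :: p)). rewrite last_default. apply last_in. }
        assert (Hdb : conn tadj (fun z => z <> a) d b).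
        { apply conn_in_path with (d :: q); auto.
          - destruct Wq; auto.
          - intros z Hz E; subst z. inversion Nq; auto.
          - left; auto.
          - rewrite <- Lq. change (In (last (d :: q) a) (d :: q)). rewrite last_default. apply last_in. }
        pose proof (conn_trans _ _ _ _ _ Hcb (conn_sym _ Hs _ _ _ Hdb)) as (g & Wg & Lg & Cg).
        destruct (shorten _ _ _ Wg) as (r & Pr & Lr & Ir).
        rewrite Lg in Lr.
        assert (Hr : r <> []).
        { intro E; subst r. simpl in Lr. congruence. }
        apply (Hac (a :: c :: r)) with a d.
        -- destruct Pr as (_ & Nr & Wr). split; [discriminate|split].
           ++ constructor; auto. intro Hin. apply Ir in Hin. apply (Cg a Hin). auto.
           ++ split; auto. destruct Wp; auto.
        -- simpl. destruct r; [congruence|]. simpl. lia.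
        -- reflexivity.
        -- apply ends_last. change (last (c :: r) a = d). rewrite last_default. exact Lr.
        -- apply Hs. destruct Wq; auto.
Qed.

Lemma last_split {A} (P : A -> Prop) l : (exists a, In a l /\ P a) ->
  exists l1 t l2, l = l1 ++ t :: l2 /\ P t /\ forall z, In z l2 -> ~ P z.
Proof.
  induction l as [|a l IH]; intros (x & Hx & Px); [destruct Hx|].
  destruct (classic (exists b, In b l /\ P b)) as [Hl|Hl].
  - destruct (IH Hl) as (l1 & t & l2 & E & Pt & H). exists (a :: l1), t, l2.
    rewrite E. auto.
  - exists [], a, l. split; [reflexivity|split].
    + destruct Hx as [<-|Hx]; auto. exfalso; eauto.
    + intros z Hz Pz. eauto.
Qed.

Lemma rel_pigeon {A B} (R : A -> B -> Prop) (l : list A) : forall (m : list B),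
  NoDup l -> (forall a, In a l -> exists b, In b m /\ R a b) ->
  (forall a a' b, In a l -> In a' l -> R a b -> R a' b -> a = a') -> length l <= length m.
Proof.
  induction l as [|a l IH]; intros m N Hex Hinj; simpl; [lia|].
  inversion N as [|? ? Hna Nl]; subst.
  destruct (Hex a (or_introl eq_refl)) as (b & Hb & Rab).
  destruct (in_split _ _ Hb) as (m1 & m2 & ->).
  assert (length l <= length (m1 ++ m2)).
  { apply IH; auto.
    - intros a' Ha'. destruct (Hex a' (or_intror Ha')) as (b' & Hb' & R').
      exists b'. split; auto. apply in_app_iff in Hb'. apply in_app_iff.
      destruct Hb' as [H|[<-|H]]; auto. exfalso.
      assert (a' = a) by (apply Hinj with b; simpl; auto). subst; auto.
    - intros x y z Hx Hy. apply Hinj; simpl; auto. }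
  rewrite length_app in *. simpl. lia.
Qed.

Lemma image_card {A B} (R : A -> B -> Prop) (L : list A) :
  (forall a x y, R a x -> R a y -> x = y) ->
  exists L' : list B, length L' <= length L /\ forall x, (exists a, In a L /\ R a x) -> In x L'.
Proof.
  intros Hf. induction L as [|a L IH].
  - exists []. split; auto. intros x (a & [] & _).
  - destruct IH as (L' & Hl & Hc).
    destruct (classic (exists x, R a x)) as [(x & Hx)|Hn].
    + exists (x :: L'). split; [simpl; lia|].
      intros y (a' & [<-|Ha'] & Hy).
      * left. eapply Hf; eauto.
      * right. eauto.
    + exists L'. split; [simpl; lia|].
      intros y (a' & [<-|Ha'] & Hy).
      * exfalso; eauto.
      * eauto.
Qed.

Lemma starts_in {A} (p : list A) u : starts p u -> In u p.
Proof. unfold starts. destruct p; simpl; intro H; [discriminate|]. injection H; auto. Qed.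

Lemma ends_in {A} (p : list A) u : ends p u -> In u p.
Proof. unfold ends. intro H. apply in_rev. apply starts_in. exact H. Qed.

Lemma ends_app {A} (l1 m : list A) v : ends (l1 ++ m) v -> m <> [] -> ends m v.
Proof.
  unfold ends. rewrite rev_app_distr. intros H Hm.
  destruct (rev m) eqn:E.
  - exfalso. apply Hm. rewrite <- (rev_involutive m), E. reflexivity.
  - exact H.
Qed.

Lemma xy_single {V} (adj : V -> V -> Prop) X Y p u :
  XY_path adj X Y p -> starts p u -> Y u -> p = [u].
Proof.
  intros (Pp & u0 & v0 & St & En & Xu & Yv & HX & HY) Su Yu.
  destruct p as [|a r]; [discriminate|].
  unfold starts in *. simpl in St, Su. injection St as E1. injection Su as E2. subst u0 u.
  assert (a = v0) as <- by (apply HY; simpl; auto).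
  apply ends_last in En. f_equal. apply (nodup_last_self a r); auto. apply Pp.
Qed.

Lemma conn_bags {V T} (adj : V -> V -> Prop) (tadj : T -> T -> Prop) bag
  (Htd : tree_decomposition adj tadj bag) (C : V -> Prop) a t1 t2 :
  C a -> bag t1 a -> bag t2 a ->
  conn (fun t t' => tadj t t' /\ exists z, C z /\ bag t z /\ bag t' z)
       (fun t => exists z, C z /\ bag t z) t1 t2.
Proof.
  intros Ca H1 H2. destruct Htd as (_ & _ & Hsub).
  destruct (Hsub a t1 t2 H1 H2) as (p & (_ & _ & Wp) & St & En & Hb).
  destruct p as [|x g]; [discriminate|]. unfold starts in St. simpl in St. injection St as ->.
  exists g. split; [|split].
  - eapply walk_mono_in; [|exact Wp]. intros x y Hx Hy Hxy. split; auto. exists a; auto.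
  - apply ends_last; auto.
  - intros z Hz. exists a; auto.
Qed.

Lemma lift {V T} (adj : V -> V -> Prop) (tadj : T -> T -> Prop) bag
  (Htd : tree_decomposition adj tadj bag) (C : V -> Prop) a b t1 t2 :
  conn adj C a b -> bag t1 a -> bag t2 b ->
  conn (fun t t' => tadj t t' /\ exists z, C z /\ bag t z /\ bag t' z)
       (fun t => exists z, C z /\ bag t z) t1 t2.
Proof.
  intros (g & W & L & Cg). revert a t1 W L Cg.
  induction g as [|a' g IH]; intros a t1 W L Cg H1 H2.
  - simpl in L. subst b. apply conn_bags with adj a; auto. apply Cg; simpl; auto.
  - destruct W as [Haa' W].
    destruct Htd as (Hcov & Hed & Hsub) eqn:Htd'.
    destruct (Hed a a' Haa') as (t0 & T0a & T0a').
    apply conn_trans with t0.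
    + apply conn_bags with adj a; auto. apply Cg; simpl; auto.
    + apply IH with a'; auto.
      * change (last (a' :: g) a = b) in L. rewrite last_default in L. exact L.
      * intros z Hz. apply Cg. right. exact Hz.
Qed.

Lemma core {V T} (adj : V -> V -> Prop) (tadj : T -> T -> Prop) (bag : T -> V -> Prop) (w l : nat)
  (Hs : forall u v, adj u v -> adj v u) (Htree : is_tree tadj)
  (Htd : tree_decomposition adj tadj bag)
  (Hw : forall t, card_le (bag t) (w + 1)) (Hl : 2 * w + 3 <= l)
  (U : V -> Prop) (HU : card_eq U l) (Px Py : list V)
  (Hpx : is_path adj Px) (Hpy : is_path adj Py) (Qx Qy : nat -> list V)
  (HQx : forall i, i < l -> XY_path adj U (fun v => In v Px) (Qx i))
  (HQx2 : forall i j, i < l -> j < l -> i <> j ->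
          Qx i <> Qx j /\ (forall v, In v (Qx i) -> In v (Qx j) -> In v Px))
  (HQy : forall i, i < l -> XY_path adj U (fun v => In v Py) (Qy i))
  (HQy2 : forall i j, i < l -> j < l -> i <> j ->
          Qy i <> Qy j /\ (forall v, In v (Qy i) -> In v (Qy j) -> In v Py)) :
  exists t, (exists v, bag t v /\ In v Px) /\ (exists v, bag t v /\ In v Py).
Proof.
  apply NNPP; intro Hno.
  assert (H : forall t, (exists v, bag t v /\ In v Px) -> (exists v, bag t v /\ In v Py) -> False)
    by eauto.
  clear Hno.
  assert (Ex0 : exists x0, In x0 Px).
  { destruct Px as [|x0 Px]; [destruct Hpx; congruence|]. exists x0; left; auto. }
  assert (Ey0 : exists y0, In y0 Py).
  { destruct Py as [|y0 Py]; [destruct Hpy; congruence|]. exists y0; left; auto. }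
  destruct Ex0 as [x0 Hx0]. destruct Ey0 as [y0 Hy0].
  destruct (proj1 Htd x0) as [t0 Ht0]. destruct (proj1 Htd y0) as [ty Hty].
  destruct Htree as (Hsimp & Hinh & Hpaths & Hac) eqn:Htree'.
  destruct (Hpaths t0 ty) as (q & Pq & Sq & Eq).
  destruct (last_split (fun t => exists v, bag t v /\ In v Px) q) as (q1 & t & q2 & Eqq & Mt & Nq2).
  { exists t0. split; [apply starts_in; auto | exists x0; auto]. }
  destruct q2 as [|t' q3].
  { subst q. unfold ends in Eq. rewrite rev_app_distr in Eq. simpl in Eq. injection Eq as E.
    apply (H t); [exact Mt | exists y0; split; [rewrite E; exact Hty | exact Hy0]]. }
  assert (Pt : is_path tadj (t :: t' :: q3)).
  { subst q. eapply path_suffix; eauto. discriminate. }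
  assert (Lt : last (t :: t' :: q3) t = ty).
  { apply ends_last. subst q. eapply ends_app; eauto. discriminate. }
  assert (Nt' : ~ exists v, bag t' v /\ In v Px) by (apply Nq2; left; auto).
  set (S := fun z => bag t z /\ bag t' z).
  assert (HSx : forall z, S z -> In z Px -> False).
  { intros z [_ Hz] Hz'. apply Nt'. eauto. }
  assert (HSy : forall z, S z -> In z Py -> False).
  { intros z [Hz _] Hz'. apply (H t); eauto. }
  assert (K : forall a b, conn adj (fun z => ~ S z) a b -> bag t a -> bag ty b -> False).
  { intros a b Cab Ha Hb.
    destruct (lift adj tadj bag Htd _ a b t ty Cab Ha Hb) as (g & Wg & Lg & _).
    destruct (shorten _ _ _ Wg) as (p & Pp & Lp & _).
    rewrite Lg in Lp.
    assert (Pp' : is_path tadj (t :: p)).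
    { destruct Pp as (A1 & A2 & A3). split; [|split]; auto.
      eapply walk_mono_in; [|exact A3]. intros x y _ _ [Hxy _]; auto. }
    pose proof (path_unique tadj Htree p (t' :: q3) t ty Pp' Pt Lp Lt) as ->.
    destruct Pp as (_ & _ & [[_ (z & Nz & Bz & Bz')] _]).
    apply Nz. split; auto. }
  clear Nq2 Eqq Sq Eq Pq.
  destruct Mt as (vt & Bvt & Ivt).
  destruct (Hw t) as (Sl & HSl & HSlen).
  destruct HU as (Ul & UN & Ulen & HUl).
  set (side := fun k => k <? l).
  set (Qb := fun k => if k <? l then Qx k else Qy (k - l)).
  set (Pb := fun k => if k <? l then Px else Py).
  assert (F1 : forall k, k < 2 * l -> XY_path adj U (fun v => In v (Pb k)) (Qb k)).
  { intros k Hk. unfold Qb, Pb. destruct (Nat.ltb_spec k l).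
    - apply HQx; auto.
    - apply HQy; lia. }
  assert (F2 : forall k k', k < 2 * l -> k' < 2 * l -> k <> k' -> side k = side k' ->
            Qb k <> Qb k' /\ forall v, In v (Qb k) -> In v (Qb k') -> In v (Pb k)).
  { intros k k' Hk Hk' Hne Hsd. unfold side, Qb, Pb in *.
    destruct (Nat.ltb_spec k l), (Nat.ltb_spec k' l); try discriminate.
    - apply HQx2; auto.
    - apply HQy2; lia. }
  assert (F3 : forall k z, S z -> In z (Pb k) -> False).
  { intros k z Sz. unfold Pb. destruct (k <? l); eauto. }
  assert (Cross : forall k k' u, k < 2 * l -> k' < 2 * l -> side k = true -> side k' = false ->
            starts (Qb k) u -> starts (Qb k') u ->
            (forall z, In z (Qb k) -> ~ S z) -> (forall z, In z (Qb k') -> ~ S z) -> False).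
  { intros k k' u Hk Hk' Sk Sk' Su Su' Ak Ak'.
    pose proof (F1 k Hk) as Xk. pose proof (F1 k' Hk') as Xk'.
    unfold side, Qb, Pb in *. rewrite Sk in *. rewrite Sk' in *.
    destruct Xk as (PQ & u1 & ex & S1 & E1 & _ & Yex & _ & _).
    destruct Xk' as (PQ' & u2 & ey & S2 & E2 & _ & Yey & _ & _).
    apply (K vt y0); auto.
    apply conn_trans with ex; [|apply conn_trans with u; [|apply conn_trans with ey]].
    - apply conn_in_path with Px; auto. apply Hpx. intros z Hz Sz; eauto.
    - apply conn_in_path with (Qx k); auto. apply PQ. apply ends_in; auto. apply starts_in; auto.
    - apply conn_in_path with (Qy (k' - l)); auto. apply PQ'. apply starts_in; auto. apply ends_in; auto.
    - apply conn_in_path with Py; auto. apply Hpy. intros z Hz Sz; eauto. }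
  assert (Hcount : length (seq 0 (2 * l)) <=
     length (map inl (map (fun z => (z, true)) Sl ++ map (fun z => (z, false)) Sl) ++ map (@inr (V * bool) V) Ul)).
  { apply rel_pigeon with (R := fun k tg =>
       (exists z, tg = inl (z, side k) /\ In z (Qb k) /\ S z) \/
       (exists u, tg = inr u /\ starts (Qb k) u /\ forall z, In z (Qb k) -> ~ S z)).
    - apply seq_NoDup.
    - intros k Hk. apply in_seq in Hk. assert (Hk2 : k < 2 * l) by lia.
      destruct (classic (exists z, In z (Qb k) /\ S z)) as [(z & Iz & Sz)|Hn].
      + exists (inl (z, side k)). split; [|left; eauto].
        apply in_app_iff. left. apply in_map. apply in_app_iff.
        assert (In z Sl) by (apply HSl; apply Sz).
        destruct (side k); [left | right]; apply in_map_iff; eauto.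
      + destruct (F1 k Hk2) as (_ & u & _ & Su & _ & Uu & _).
        exists (inr u). split.
        * apply in_app_iff. right. apply in_map. apply HUl. auto.
        * right. exists u. split; auto. split; auto. intros z Hz Sz. apply Hn. eauto.
    - intros k k' tg Hk Hk' R1 R2. apply in_seq in Hk, Hk'.
      assert (Hk2 : k < 2 * l) by lia. assert (Hk2' : k' < 2 * l) by lia.
      destruct (Nat.eq_dec k k') as [|Hne]; auto. exfalso.
      destruct R1 as [(z & -> & Iz & Sz)|(u & -> & Su & Au)];
      destruct R2 as [(z' & E & Iz' & Sz')|(u' & E & Su' & Au')]; try discriminate.
      + injection E as <- Esd.
        destruct (F2 k k' Hk2 Hk2' Hne Esd) as [_ Hint].
        apply (F3 k z); auto.
      + injection E as <-.
        destruct (side k) eqn:Ek, (side k') eqn:Ek'.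
        * destruct (F2 k k' Hk2 Hk2' Hne (eq_trans Ek (eq_sym Ek'))) as [Hd Hint].
          destruct (F2 k' k Hk2' Hk2 (not_eq_sym Hne) (eq_trans Ek' (eq_sym Ek))) as [_ Hint'].
          assert (E1 : Qb k = [u]) by (apply (xy_single _ _ _ _ _ (F1 k Hk2) Su); apply Hint; apply starts_in; auto).
          assert (E2 : Qb k' = [u]) by (apply (xy_single _ _ _ _ _ (F1 k' Hk2') Su'); apply Hint'; apply starts_in; auto).
          apply Hd; rewrite E1, E2; reflexivity.
        * apply (Cross k k' u); auto.
        * apply (Cross k' k u); auto.
        * destruct (F2 k k' Hk2 Hk2' Hne (eq_trans Ek (eq_sym Ek'))) as [Hd Hint].
          destruct (F2 k' k Hk2' Hk2 (not_eq_sym Hne) (eq_trans Ek' (eq_sym Ek))) as [_ Hint'].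
          assert (E1 : Qb k = [u]) by (apply (xy_single _ _ _ _ _ (F1 k Hk2) Su); apply Hint; apply starts_in; auto).
          assert (E2 : Qb k' = [u]) by (apply (xy_single _ _ _ _ _ (F1 k' Hk2') Su'); apply Hint'; apply starts_in; auto).
          apply Hd; rewrite E1, E2; reflexivity. }
  rewrite length_seq, !length_app, !length_map in Hcount. rewrite length_app, !length_map in Hcount. lia.
Qed.

Theorem corollary6p3 (V : Type) (adj : V -> V -> Prop) (w : nat)
  (sigma : @osep V -> Prop) :
  simple_graph adj ->
  tw_le adj w ->
  is_star adj sigma ->
  finite_star sigma ->
  (forall s, sigma s -> order_le s (w + 1)) ->
  finite_set (interior sigma) ->
  (forall s, sigma s ->
     left_robust adj ((w + 1) ^ 2 * (w + 2) + w + 1) s) ->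
  tw_le (torso_adj adj sigma) w.
Proof.
  intros Hsimple Htw Hstar _ _ _ Hrob.
  destruct Hsimple as [Hs _].
  destruct Htw as (T & tadj & bag & Htree & Htd & Hw).
  set (l := (w + 1) ^ 2 * (w + 2) + w + 1) in *.
  assert (Hl : 2 * w + 3 <= l) by (unfold l; rewrite Nat.pow_2_r; nia).
  set (RobP := fun (s : osep) (UP : (V -> Prop) * (V -> list V)) =>
    (forall u, fst UP u -> fst s u) /\ card_eq (fst UP) l /\
      (forall x, sep_inter s x ->
         is_path adj (snd UP x) /\ (forall v, In v (snd UP x) -> fst s v) /\ ends (snd UP x) x) /\
      (forall x y, sep_inter s x -> sep_inter s y -> x <> y ->
         forall v, In v (snd UP x) -> ~ In v (snd UP y)) /\
      (forall x, sep_inter s x ->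
         exists Q : nat -> list V,
           (forall i, i < l ->
              XY_path adj (fst UP) (fun v => In v (snd UP x)) (Q i) /\
              (forall v, In v (Q i) -> (fst s v /\ ~ snd s v) \/ v = x)) /\
           (forall i j, i < l -> j < l -> i <> j ->
              Q i <> Q j /\
              (forall v, In v (Q i) -> In v (Q j) -> In v (snd UP x))))).
  assert (Hch : forall s, exists UP, sigma s -> RobP s UP).
  { intro s. destruct (classic (sigma s)) as [Hss|Hn].
    - destruct (Hrob s Hss) as (U & HU1 & HU2 & P & HP). exists (U, P). intros _.
      unfold RobP; simpl. split; auto.
    - exists ((fun _ => False), (fun _ => [])). intro; contradiction. }
  assert (HF : exists F, forall s, sigma s -> RobP s (F s)).
  { exists (fun s => proj1_sig (constructive_indefinite_description _ (Hch s))).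
    intro s. exact (proj2_sig (constructive_indefinite_description _ (Hch s))). }
  destruct HF as [F HF]. clear Hch Hrob.
  set (P := fun s => snd (F s)).
  assert (HP1 : forall s x, sigma s -> sep_inter s x ->
     is_path adj (P s x) /\ (forall v, In v (P s x) -> fst s v) /\ ends (P s x) x).
  { intros s x Hss Hx. apply (HF s Hss). exact Hx. }
  assert (HP2 : forall s x y, sigma s -> sep_inter s x -> sep_inter s y -> x <> y ->
         forall v, In v (P s x) -> ~ In v (P s y)).
  { intros s x y Hss. apply (HF s Hss). }
  assert (Hmeet : forall s x y, sigma s -> sep_inter s x -> sep_inter s y -> x <> y ->
     exists t, (exists v, bag t v /\ In v (P s x)) /\ (exists v, bag t v /\ In v (P s y))).
  { intros s x y Hss Hx Hy Hne.
    destruct (HF s Hss) as (_ & HU & HPa & _ & HQ).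
    destruct (HQ x Hx) as (Qx & HQx & HQx2).
    destruct (HQ y Hy) as (Qy & HQy & HQy2).
    apply (core adj tadj bag w l Hs Htree Htd Hw Hl (fst (F s)) HU (P s x) (P s y)
             (proj1 (HPa x Hx)) (proj1 (HPa y Hy)) Qx Qy); auto.
    - intros i Hi. apply HQx; auto.
    - intros i Hi. apply HQy; auto. }
  clear HF.
  destruct Hstar as (_ & _ & Hle).
  set (M := fun v x => (interior sigma x /\ v = x) \/
                       (exists s, sigma s /\ sep_inter s x /\ In v (P s x))).
  assert (Hself : forall s v x, sigma s -> sep_inter s x -> sep_inter s v -> In v (P s x) -> x = v).
  { intros s v x Hss Hx Hv Hin. apply NNPP; intro Hne.
    apply (HP2 s x v Hss Hx Hv Hne v Hin). apply ends_in. apply (HP1 s v Hss Hv). }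
  assert (Mfun : forall v x y, M v x -> M v y -> x = y).
  { intros v x y [[Ix ->]|(s & Hss & Hx & Hin)] [[Iy Ey]|(s' & Hss' & Hy & Hin')].
    - auto.
    - symmetry. apply (Hself s' x y); auto. split.
      + apply (HP1 s' y Hss' Hy); auto.
      + apply Ix; auto.
    - subst v. apply (Hself s y x); auto. split.
      + apply (HP1 s x Hss Hx); auto.
      + apply Iy; auto.
    - destruct (classic (s = s')) as [<-|Hss2].
      + apply NNPP; intro Hne. apply (HP2 s x y Hss Hx Hy Hne v Hin Hin').
      + assert (Hvs : fst s v) by (apply (HP1 s x Hss Hx); auto).
        assert (Hvs' : fst s' v) by (apply (HP1 s' y Hss' Hy); auto).
        destruct (Hle s s' Hss Hss' Hss2) as [Hl1 _].
        destruct (Hle s' s Hss' Hss (not_eq_sym Hss2)) as [Hl2 _].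
        simpl in Hl1, Hl2.
        transitivity v.
        * apply (Hself s v x); auto. split; auto.
        * symmetry. apply (Hself s' v y); auto. split; auto. }
  exists T, tadj, (fun t (x : {x : V | interior sigma x}) => exists v, bag t v /\ M v (proj1_sig x)).
  split; [exact Htree|split; [split; [|split]|]].
  - intros [x Hx]. destruct (proj1 Htd x) as [t Ht]. exists t, x. split; auto. left; auto.
  - intros [u Hu] [v Hv] (Hne & [Hadj|(s & Hss & Hus & Hvs)]); simpl in *.
    + destruct (proj1 (proj2 Htd) u v Hadj) as (t & Htu & Htv).
      exists t. split; [exists u | exists v]; split; auto; left; auto.
    + destruct (Hmeet s u v Hss Hus Hvs Hne) as (t & (a & Ba & Ia) & (b & Bb & Ib)).
      exists t. split; [exists a | exists b]; split; auto; right; exists s; auto.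
  - intros [x Hx] t1 t2 (v1 & B1 & M1) (v2 & B2 & M2). simpl in *.
    assert (Cx : forall v, M v x -> conn adj (fun z => M z x) v x).
    { intros v [[_ ->]|(s & Hss & Hxs & Hin)].
      - apply conn_refl. left; auto.
      - destruct (HP1 s x Hss Hxs) as ((_ & _ & Wp) & _ & Ep).
        apply conn_in_path with (P s x); auto.
        + intros z Hz. right. exists s; auto.
        + apply ends_in; auto. }
    pose proof (conn_trans _ _ _ _ _ (Cx v1 M1) (conn_sym _ Hs _ _ _ (Cx v2 M2))) as C12.
    destruct (lift adj tadj bag Htd _ v1 v2 t1 t2 C12 B1 B2) as (g & Wg & Lg & Ng).
    destruct (shorten _ _ _ Wg) as (p & Pp & Lp & Ip).
    exists (t1 :: p). split; [|split; [|split]].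
    + destruct Pp as (A1 & A2 & A3). split; [|split]; auto.
      eapply walk_mono_in; [|exact A3]. intros a b _ _ [Hab _]; auto.
    + reflexivity.
    + apply ends_last. rewrite Lp. exact Lg.
    + intros t Ht. apply Ip in Ht. destruct (Ng t Ht) as (z & Mz & Bz). exists z; auto.
  - intros t. destruct (Hw t) as (L & HL & HLlen).
    destruct (image_card (fun v (x : {x : V | interior sigma x}) => M v (proj1_sig x)) L)
      as (L' & HL'len & HL').
    + intros v [x Hx] [y Hy] Mx My. simpl in *.
      pose proof (Mfun v x y Mx My) as <-. f_equal. apply proof_irrelevance.
    + exists L'. split; [|lia].
      intros x (v & Bv & Mv). apply HL'. exists v. split; auto.
Qed.
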